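(* Let $\beta\in(0,1)$, $z>0$, $c>0$, $\delta\in(0,1)$, and let $N$ and $\Delta$ be positive integers. Let $F$ be a continuous cumulative distribution function with support $[\underline{w},\overline{w}]$, $\underline{w}<\overline{w}$, and mean $\mu_w$, and assume $\underline{w}<(1-\beta)z+\beta\mu_w$ and $z+c<\overline{w}$. Put $\Upsilon(x)=\int_{\underline{w}}^{x}x\,dF(w)+\int_{x}^{\overline{w}}w\,dF(w)$. Let $w_R(0)$ be the unique solution in $[\underline{w},\overline{w}]$ of $x=z(1-\beta)+\beta\Upsilon(x)$ and $w_R(n)=(z+c)(1-\beta)+\beta\Upsilon(w_R(n-1))$ for $n\ge1$. Let $w_R^\delta(0)=w_R^{\delta,\Delta}(0)$ be the unique solution in $[\underline{w},\overline{w}]$ of $x=z(1-\beta)+\beta\delta\Upsilon(w_R(\Delta))+\beta(1-\delta)\Upsilon(x)$, and for $n=1,\dots,N$ let $w_R^{\delta}(n)=w_R^{\delta,\Delta}(n)=(z+c)(1-\beta)+\beta\delta\Upsilon(w_R(n-1+\Delta))+\beta(1-\delta)\Upsilon(w_R^\delta(n-1))$. Then for each $n\in\{0,\dots,N\}$: (i) for fixed $\Delta$, $w_R^{\delta,\Delta}(n)$ is strictly increasing in $\delta$; (ii) for fixed $\delta$, $w_R^{\delta,\Delta}(n)$ is strictly increasing in $\Delta$ over the positive integers.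
   Context: Interpretation: $w_R(n)$ are the reservation wages of a risk-neutral job searcher (discount factor $\beta$, one i.i.d. offer per period from $F$, jobs kept forever, flow income $z+c$ while unemployed with $n\ge1$ remaining periods of unemployment benefits and $z$ when $n=0$) with no possibility of benefit extension; $w_R^{\delta}(n)$ are the reservation wages when, before any extension has occurred, benefits are extended (once) by $\Delta$ periods with probability $\delta$ between offers. $\delta$ and $\Delta$ represent the worker's beliefs about the probability and the length of an extension; the claim says the worker is more selective when believing an extension more likely or longer. *)

(* Defs.v *)
From HB Require Import structures.
From mathcomp Require Import all_boot all_order all_algebra.
From mathcomp Require Import all_classical all_reals all_analysis.
Set Implicit Arguments. Unset Strict Implicit. Unset Printing Implicit Defensive.
Import Order.TTheory GRing.Theory Num.Theory.
Import numFieldTopology.Exports.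
Local Open Scope classical_set_scope.
Local Open Scope ring_scope.

Section defs.
Context {R : realType}.
Variables (F : cumulativeBounded (0:R) (1:R)) (wl wh beta z c : R).

Definition dF := lebesgue_stieltjes_measure F.

Definition meanF : R := Rintegral dF `[wl, wh] (fun w => w).

Definition Upsilon (x : R) : R :=
  Rintegral dF `[wl, x] (fun _ => x) + Rintegral dF `]x, wh] (fun w => w).

Definition fixpt (g : R -> R) : R :=
  xget wl [set x | wl <= x <= wh /\ x = g x].

(* w_R(n): no extension possible *)
Fixpoint wR (n : nat) : R :=
  match n with
  | 0%N => fixpt (fun x => z * (1 - beta) + beta * Upsilon x)
  | n'.+1 => (z + c) * (1 - beta) + beta * Upsilon (wR n')
  end.

Fixpoint wRd (delta : R) (Delta : nat) (n : nat) : R :=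
  match n with
  | 0%N => fixpt (fun x => z * (1 - beta) + beta * delta * Upsilon (wR Delta)
                           + beta * (1 - delta) * Upsilon x)
  | n'.+1 => (z + c) * (1 - beta) + beta * delta * Upsilon (wR (n' + Delta))
             + beta * (1 - delta) * Upsilon (wRd delta Delta n')
  end.
End defs.

(* Main.v *)
Require Import Defs.
From HB Require Import structures.
From mathcomp Require Import all_boot all_order all_algebra.
From mathcomp Require Import all_classical all_reals all_analysis.
From mathcomp Require Import ring lra.
Import Order.TTheory GRing.Theory Num.Theory.
Import numFieldTopology.Exports.
Local Open Scope classical_set_scope.
Local Open Scope ring_scope.
Section meas.
Context {R : realType} (F : cumulativeBounded (0:R) (1:R)) (wl wh : R).

Lemma dFoc a b : a <= b -> dF F `]a,b] = (F b - F a)%:E.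
Proof.
move=> ab; rewrite /dF /lebesgue_stieltjes_measure /measure_extension measurable_mu_extE/=; last exact: is_ocitv.
by rewrite wlength_itv_bnd.
Qed.

Lemma dF_fin A : measurable A -> dF F A \is a fin_num.
Proof.
move=> mA; rewrite ge0_fin_numE ?measure_ge0//.
by apply: (le_lt_trans (probability_le1 _ mA)); rewrite ltey.
Qed.

Lemma id_int a b : (dF F).-integrable `]a,b] (EFin \o id).
Proof.
apply: measurable_bounded_integrable => //.
- by rewrite (le_lt_trans (probability_le1 _ _)) ?ltey.
exists (`|a| + `|b|); split; first by rewrite realE; apply/orP; left; rewrite addr_ge0.
  move=> M hM x /=; rewrite in_itv/= => /andP[ax xb].
  rewrite (le_trans _ (ltW hM))// ler_norml.
  have := ler_norm a; have := ler_norm (-a); have := ler_norm b; have := ler_norm (-b).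
  rewrite !normrN => *; apply/andP; split; lra.
Qed.

Let G x := fine (dF F `[wl, x]).
Let I a b := Rintegral (dF F) `]a,b] (fun w => w).

Lemma U_eq x : Upsilon F wl wh x = x * G x + I x wh.
Proof. by rewrite /Upsilon Rintegral_cst. Qed.

Lemma G_split x y : wl <= x -> x <= y -> G y = G x + (F y - F x).
Proof.
move=> wx xy; rewrite /G.
have -> : dF F `[wl,y] = (dF F `[wl,x] + dF F `]x,y])%E.
  rewrite (@itv_bndbnd_setU _ _ (BLeft wl) (BRight x) (BRight y)) ?bnd_simp//.
  apply: measureU => //.
  apply/seteqP; split => t //=; rewrite !in_itv/= => -[/andP[_ h1] /andP[h2 _]].
  by move: (lt_le_trans h2 h1); rewrite ltxx.
by rewrite dFoc// fineD// dF_fin.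
Qed.

Lemma G_ge0 x : 0 <= G x.
Proof. by rewrite /G fine_ge0. Qed.

Lemma G_le1 x : G x <= 1.
Proof.
rewrite /G -lee_fin fineK ?dF_fin//; exact: probability_le1.
Qed.

Lemma I_split x y : x <= y -> y <= wh -> I x wh = I x y + I y wh.
Proof.
move=> xy yw; rewrite /I.
rewrite (@itv_bndbnd_setU _ _ (BRight x) (BRight y) (BRight wh)) ?bnd_simp//.
rewrite Rintegral_setU//.
- by rewrite -(@itv_bndbnd_setU _ _ (BRight x) (BRight y) (BRight wh)) ?bnd_simp//; exact: id_int.
- apply/disj_set2P; apply/seteqP; split => t //=; rewrite !in_itv/= => -[/andP[_ h1] /andP[h2 _]].
  by move: (lt_le_trans h2 h1); rewrite ltxx.
Qed.

Lemma I_bounds x y : x <= y -> x * (F y - F x) <= I x y <= y * (F y - F x).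
Proof.
move=> xy; have -> : F y - F x = fine (dF F `]x, y]) by rewrite dFoc.
rewrite /I -!Rintegral_cst//; apply/andP; split; apply: le_Rintegral => //.
- by apply: measurable_bounded_integrable => //; [rewrite (le_lt_trans (probability_le1 _ _)) ?ltey// | exact: bounded_cst].
- exact: id_int.
- by move=> t /=; rewrite in_itv/= => /andP[/ltW].
- exact: id_int.
- by apply: measurable_bounded_integrable => //; [rewrite (le_lt_trans (probability_le1 _ _)) ?ltey// | exact: bounded_cst].
- by move=> t /=; rewrite in_itv/= => /andP[].
Qed.

Lemma I_empty : I wh wh = 0.
Proof. by rewrite /I set_itv_ge ?bnd_simp// Rintegral_set0. Qed.

Lemma U_wl : wl < wh -> Upsilon F wl wh wl = meanF F wl wh.
Proof.
move=> lw; rewrite /Upsilon /meanF.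
rewrite (@itv_bndbnd_setU _ _ (BLeft wl) (BRight wl) (BRight wh)) ?bnd_simp ?ltW//.
rewrite Rintegral_setU//.
- congr (_ + _); apply: eq_Rintegral => t; rewrite inE/= in_itv/= => /andP[h1 h2].
  by apply/eqP; rewrite eq_le h1 h2.
- rewrite -(@itv_bndbnd_setU _ _ (BLeft wl) (BRight wl) (BRight wh)) ?bnd_simp ?ltW//.
  apply: measurable_bounded_integrable => //.
  + by rewrite (le_lt_trans (probability_le1 _ _)) ?ltey.
  + exists (`|wl| + `|wh|); split; first by rewrite realE; apply/orP; left; rewrite addr_ge0.
    move=> M hM x /=; rewrite in_itv/= => /andP[ax xb].
    rewrite (le_trans _ (ltW hM))// ler_norml.
    have := ler_norm wl; have := ler_norm (-wl); have := ler_norm wh; have := ler_norm (-wh).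
    rewrite !normrN => *; apply/andP; split; lra.
- apply/disj_set2P; apply/seteqP; split => t //=; rewrite !in_itv/= => -[/andP[_ h1] /andP[h2 _]].
  by move: (lt_le_trans h2 h1); rewrite ltxx.
Qed.

Lemma U_diff x y : wl <= x -> x <= y -> y <= wh ->
  0 <= Upsilon F wl wh y - Upsilon F wl wh x <= y - x /\
  (y - x) * G x <= Upsilon F wl wh y - Upsilon F wl wh x.
Proof.
move=> wx xy yw; rewrite !U_eq (G_split _ _ wx xy) (I_split _ _ xy yw).
have /andP[h1 h2] := I_bounds _ _ xy.
have g0 := G_ge0 x; have g1 := G_le1 y; rewrite (G_split _ _ wx xy) in g1.
split; last by nra.
apply/andP; split; nra.
Qed.

Lemma U_strict x y : wl <= x -> x < y -> y <= wh -> F wl = 0 ->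
  (forall a b, wl <= a -> a < b -> b <= wh -> F a < F b) ->
  Upsilon F wl wh x < Upsilon F wl wh y.
Proof.
move=> wx xy yw Fwl Fs.
set m := (x + y) / 2.
have xm : x < m by rewrite /m; lra.
have my : m < y by rewrite /m; lra.
have [/andP[h1 _] _] := U_diff _ _ wx (ltW xm) (ltW (lt_le_trans my yw)).
have wm : wl <= m by lra.
have [_ h2] := U_diff _ _ wm (ltW my) yw.
have Gm : 0 < G m.
  rewrite (G_split _ _ (lexx wl) wm) Fwl.
  have := Fs wl m (lexx _) (le_lt_trans wx xm) (ltW (lt_le_trans my yw)).
  have := G_ge0 wl; rewrite Fwl; lra.
have : 0 < (y - m) * G m by rewrite mulr_gt0// subr_gt0.
lra.
Qed.

Lemma U_wh : 0 <= wh -> Upsilon F wl wh wh <= wh.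
Proof.
move=> wh0; rewrite U_eq I_empty addr0.
by rewrite ler_piMr// G_le1.
Qed.
End meas.

Section fixs.
Context {R : realType} (wl wh : R).

Lemma lip_cont (h : R -> R) K : 0 < K ->
  (forall x y, `|h x - h y| <= K * `|x - y|) -> continuous h.
Proof.
move=> K0 hL x; apply/cvgrPdist_lt => e e0.
near=> y; rewrite (le_lt_trans (hL _ _))// mulrC -ltr_pdivlMr//.
near: y; apply/nbhs_normP; exists (e / K); first exact: divr_gt0.
by move=> t /=.
Unshelve. all: end_near.
Qed.

Definition clamp x := if x < wl then wl else if wh < x then wh else x.

Lemma clamp_in x : wl <= wh -> wl <= clamp x <= wh.
Proof.
move=> lw; rewrite /clamp; have [h|h] := ltP x wl; first by rewrite lexx lw.
by have [h'|h'] := ltP wh x; rewrite ?lexx ?lw ?h ?h'.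
Qed.

Lemma clamp_id x : wl <= x -> x <= wh -> clamp x = x.
Proof.
move=> h1 h2; rewrite /clamp; have [h|h] := ltP x wl; first lra.
by have [h'|h'] := ltP wh x; first lra.
Qed.

Lemma clamp_lip x y : wl <= wh -> `|clamp x - clamp y| <= `|x - y|.
Proof.
move=> lw; have := ler_norm (x - y); have := ler_norm (y - x); rewrite distrC => h1 h2.
rewrite ler_norml /clamp.
have [a|a] := ltP x wl; have [b|b] := ltP y wl; try have [c|c] := ltP wh x;
  try have [d|d] := ltP wh y; apply/andP; split; lra.
Qed.

Lemma fixpt_spec (g : R -> R) : wl <= wh ->
  (forall x y, wl <= x -> x <= y -> y <= wh -> 0 <= g y - g x <= y - x) ->
  wl < g wl -> g wh < wh ->
  wl <= fixpt wl wh g <= wh /\ fixpt wl wh g = g (fixpt wl wh g).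
Proof.
move=> lw gL g0 g1.
have glip a b : wl <= a <= wh -> wl <= b <= wh -> `|g a - g b| <= `|a - b|.
  move=> /andP[a1 a2] /andP[b1 b2]; have [ab|ab] := leP a b.
    have /andP[h1 h2] := gL a b a1 ab b2.
    by rewrite distrC (distrC a) (ger0_norm h1) ger0_norm //; lra.
  have /andP[h1 h2] := gL b a b1 (ltW ab) a2.
  by rewrite (ger0_norm h1) ger0_norm //; lra.
pose h x := g (clamp x) - clamp x.
have hc : continuous h.
  apply: (@lip_cont _ 2) => // x y.
  rewrite /h (_ : _ - _ = (g (clamp x) - g (clamp y)) - (clamp x - clamp y)); last by ring.
  rewrite (le_trans (ler_normB _ _))// mulr2n mulrDl mul1r lerD//.
    by rewrite (le_trans (glip _ _ (clamp_in _ lw) (clamp_in _ lw))) ?clamp_lip.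
  exact: clamp_lip.
have [c cin hc0] : exists2 c, c \in `[wl, wh] & h c = 0.
  apply: IVT => //; first by apply: continuous_subspaceT.
  rewrite /h !clamp_id ?lexx//.
  rewrite ge_min le_max; apply/andP; split; apply/orP; [right|left]; lra.
have /andP[c1 c2] : wl <= c <= wh by move: cin; rewrite in_itv.
rewrite /fixpt; apply: (@xgetPex _ wl [set x | wl <= x <= wh /\ x = g x]).
exists c; split; first by rewrite c1 c2.
by move: hc0; rewrite /h clamp_id//; lra.
Qed.
End fixs.

Section alg.
Context {R : realType}.

Lemma alg0 (b d1 d2 K UA x1 x2 U1 U2 : R) : 0 < b < 1 -> 0 < d1 -> d1 < d2 ->
  x1 = K + b * d1 * UA + b * (1 - d1) * U1 ->
  x2 = K + b * d2 * UA + b * (1 - d2) * U2 -> U1 < UA ->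
  (x2 <= x1 -> U2 <= U1 /\ U1 - U2 <= x1 - x2) -> x1 < x2.
Proof.
move=> /andP[b0 b1] d10 d12 e1 e2 UA1 H; rewrite ltNge; apply/negP => le21.
have [h1 h2] := H le21.
have E : (x2 - b * U2) - (x1 - b * U1) = b * (d2 * (UA - U2) - d1 * (UA - U1)).
  by rewrite {1}e2 {1}e1; ring.
have : b * (U1 - U2) <= x1 - x2 by nra.
have : d1 * (UA - U1) < d2 * (UA - U1) by nra.
have : d2 * (UA - U1) <= d2 * (UA - U2) by nra.
nra.
Qed.

Lemma alg1 (b d1 d2 K B U1 U2 : R) : 0 < b -> 0 < d1 -> d1 < d2 -> d2 < 1 ->
  U1 < B -> U1 <= U2 ->
  K + b * d1 * B + b * (1 - d1) * U1 < K + b * d2 * B + b * (1 - d2) * U2.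
Proof.
move=> b0 d10 d12 d21 UB U12.
have : 0 < b * ((d2 - d1) * (B - U1)) by rewrite mulr_gt0// mulr_gt0// subr_gt0.
have p1 : 0 <= 1 - d2 by lra.
have p2 : 0 <= U2 - U1 by lra.
have := mulr_ge0 (ltW b0) (mulr_ge0 p1 p2).
lra.
Qed.

Lemma alg2 (b d K A1 A2 x1 x2 U1 U2 : R) : 0 < b < 1 -> 0 < d < 1 ->
  x1 = K + b * d * A1 + b * (1 - d) * U1 ->
  x2 = K + b * d * A2 + b * (1 - d) * U2 -> A1 < A2 ->
  (x2 <= x1 -> U2 <= U1 /\ U1 - U2 <= x1 - x2) -> x1 < x2.
Proof.
move=> /andP[b0 b1] /andP[d0 d1] e1 e2 A12 H; rewrite ltNge; apply/negP => le21.
have [h1 h2] := H le21.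
have E : x1 - x2 = b * d * (A1 - A2) + b * (1 - d) * (U1 - U2).
  by rewrite {1}e2 {1}e1; ring.
have : b * d * (A1 - A2) < 0 by rewrite pmulr_rlt0 ?mulr_gt0// subr_lt0.
have : b * (1 - d) * (U1 - U2) <= b * (1 - d) * (x1 - x2).
  by rewrite ler_wpM2l//; apply: mulr_ge0; lra.
have : b * (1 - d) * (x1 - x2) <= x1 - x2.
  rewrite ler_piMl ?subr_ge0//; nra.
lra.
Qed.

Lemma alg3 (b d K B1 B2 U1 U2 : R) : 0 < b -> 0 < d < 1 -> B1 < B2 -> U1 <= U2 ->
  K + b * d * B1 + b * (1 - d) * U1 < K + b * d * B2 + b * (1 - d) * U2.
Proof.
move=> b0 /andP[d0 d1] B12 U12.
have : 0 < b * d * (B2 - B1) by rewrite mulr_gt0 ?mulr_gt0// subr_gt0.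
have p1 : 0 <= 1 - d by lra.
have p2 : 0 <= U2 - U1 by lra.
have := mulr_ge0 (mulr_ge0 (ltW b0) p1) p2.
lra.
Qed.
End alg.

Section main.
Context {R : realType} (F : cumulativeBounded (0:R) (1:R)) (wl wh beta z c : R).
Context (hb : 0 < beta < 1) (hz : 0 < z) (hc : 0 < c) (Fwl : F wl = 0)
 (Fs : forall a b, wl <= a -> a < b -> b <= wh -> F a < F b) (lw : wl < wh)
 (hmean : wl < (1 - beta) * z + beta * meanF F wl wh) (hzc : z + c < wh).

Local Notation U := (Upsilon F wl wh).
Local Notation W := (wR F wl wh beta z c).
Local Notation Wd := (wRd F wl wh beta z c).

Let b0 : 0 < beta. Proof. by case/andP: hb. Qed.
Let b1 : beta < 1. Proof. by case/andP: hb. Qed.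
Local Ltac prep := have := hz; have := hc; have := hzc; have := hmean; have := b0; have := b1; have := lw; move=> *.

Lemma Um {x y} : wl <= x -> x <= y -> y <= wh -> U x <= U y /\ U y - U x <= y - x.
Proof.
move=> h1 h2 h3; have [/andP[a b] _] := @U_diff _ F wl wh x y h1 h2 h3; split => //; (prep; lra).
Qed.

Lemma Us {x y} : wl <= x -> x < y -> y <= wh -> U x < U y.
Proof. by move=> h1 h2 h3; apply: (@U_strict _ F wl wh x y). Qed.

Lemma Ulo {x} : wl <= x -> x <= wh -> meanF F wl wh <= U x.
Proof. by move=> h1 h2; rewrite -(@U_wl _ F wl wh)//; have [] := Um (lexx wl) h1 h2. Qed.

Lemma Uhi {x} : wl <= x -> x <= wh -> U x <= wh.
Proof.
move=> h1 h2; have [h _] := Um h1 h2 (lexx wh).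
apply: (le_trans h); apply: (@U_wh _ F wl wh); (prep; lra).
Qed.

Lemma W0 : wl <= W 0 <= wh /\ W 0 = z * (1 - beta) + beta * U (W 0).
Proof.
apply: (@fixpt_spec _ wl wh (fun x => z * (1 - beta) + beta * U x)).
- exact: ltW.
- move=> x y h1 h2 h3; have [a b] := Um h1 h2 h3; apply/andP; split; (prep; nra).
- rewrite (@U_wl _ F wl wh)//; (prep; lra).
- have := Uhi (ltW lw) (lexx wh); (prep; nra).
Qed.

Lemma W_S n : W n.+1 = (z + c) * (1 - beta) + beta * U (W n).
Proof. by []. Qed.

Lemma W_in n : wl <= W n <= wh.
Proof.
elim: n => [|n /andP[h1 h2]]; first by case: W0.
rewrite W_S; have := Ulo h1 h2; have := Uhi h1 h2 => u1 u2.
have := ler_wpM2l (ltW b0) u1; have := ler_wpM2l (ltW b0) u2 => v1 v2.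
apply/andP; split; (prep; nra).
Qed.

Lemma W_succ n : W n < W n.+1.
Proof.
elim: n => [|n IH].
  rewrite W_S; have [_ e] := W0; (prep; nra).
rewrite [W n.+2]W_S [X in X < _]W_S.
have /andP[h1 h2] := W_in n; have /andP[h3 h4] := W_in n.+1.
have := Us h1 IH h4; (prep; nra).
Qed.

Lemma W_lt {m n} : (m < n)%N -> W m < W n.
Proof.
elim: n => // n IH; rewrite ltnS leq_eqVlt => /orP[/eqP->|/IH h]; first exact: W_succ.
exact: lt_trans h (W_succ n).
Qed.

Lemma Wd_S d D n : Wd d D n.+1 =
  (z + c) * (1 - beta) + beta * d * U (W (n + D)) + beta * (1 - d) * U (Wd d D n).
Proof. by []. Qed.

Lemma Wd0 {d} D : 0 < d < 1 -> wl <= Wd d D 0 <= wh /\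
  Wd d D 0 = z * (1 - beta) + beta * d * U (W D) + beta * (1 - d) * U (Wd d D 0).
Proof.
move=> /andP[d0 d1].
have /andP[a1 a2] := W_in D.
have bd0 : 0 <= beta * d by apply: mulr_ge0; (prep; lra).
have bd1 : 0 <= beta * (1 - d) by apply: mulr_ge0; (prep; lra).
apply: (@fixpt_spec _ wl wh (fun x => z * (1 - beta) + beta * d * U (W D) + beta * (1 - d) * U x)).
- exact: ltW.
- move=> x y h1 h2 h3; have [a b] := Um h1 h2 h3.
  have := ler_wpM2l bd1 b; have := ler_wpM2l bd1 a => u1 u2.
  apply/andP; split; (prep; nra).
- have := ler_wpM2l bd0 (Ulo a1 a2); rewrite (@U_wl _ F wl wh)//; (prep; nra).
- have := ler_wpM2l bd0 (Uhi a1 a2); have := ler_wpM2l bd1 (Uhi (ltW lw) (lexx wh)); (prep; nra).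
Qed.

Lemma Wd_inv d D n : 0 < d < 1 -> (0 < D)%N ->
  wl <= Wd d D n <= wh /\ Wd d D n < W (n + D).
Proof.
move=> hd D0; have /andP[d0 d1] := hd.
have bd0 : 0 <= beta * d by apply: mulr_ge0; (prep; lra).
have bd1 : 0 < beta * (1 - d) by apply: mulr_gt0; (prep; lra).
elim: n => [|n [/andP[h1 h2] IH]].
  have [/andP[x1 x2] e] := Wd0 D hd; split; first by rewrite x1 x2.
  rewrite add0n ltNge; apply/negP => Ax.
  have [[/andP[w1 w2] ew] /andP[a1 a2]] := (W0, W_in D).
  have wA := W_lt D0.
  have [u1 _] := Um a1 Ax x2.
  have [_ u2] := Um w1 (ltW (lt_le_trans wA Ax)) x2.
  have := ler_wpM2l bd0 u1; have := ler_wpM2l (ltW b0) u2 => v1 v2.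
  have : beta * (Wd d D 0 - W 0) < Wd d D 0 - W 0.
    by rewrite gtr_pMl ?subr_gt0// (lt_le_trans wA Ax).
  (prep; lra).
have /andP[a1 a2] := W_in (n + D).
have := Ulo h1 h2; have := Uhi h1 h2 => u1 u2.
have := Ulo a1 a2; have := Uhi a1 a2 => u3 u4.
have := ler_wpM2l (ltW bd1) u1; have := ler_wpM2l (ltW bd1) u2.
have := ler_wpM2l bd0 u3; have := ler_wpM2l bd0 u4 => v1 v2 v3 v4.
rewrite Wd_S addSn W_S; split.
  apply/andP; split; (prep; nra).
have := Us h1 IH a2 => s.
have := ltr_pM2l bd1; move=> /(_ (U (Wd d D n)) (U (W (n + D)))); rewrite s => s'.
(prep; nra).
Qed.

Lemma part_i D d1 d2 n : (0 < D)%N -> 0 < d1 -> d1 < d2 -> d2 < 1 ->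
  Wd d1 D n < Wd d2 D n.
Proof.
move=> D0 d10 d12 d21.
have hd1 : 0 < d1 < 1 by apply/andP; split => //; exact: lt_trans d12 d21.
have hd2 : 0 < d2 < 1 by apply/andP; split => //; exact: lt_trans d10 d12.
elim: n => [|n IH].
  have [[/andP[x11 x12] e1] [/andP[x21 x22] e2]] := (Wd0 D hd1, Wd0 D hd2).
  have [_ lt1] := Wd_inv d1 D 0 hd1 D0; rewrite add0n in lt1.
  have /andP[a1 a2] := W_in D.
  apply: (alg0 _ _ _ _ _ _ _ _ _ hb d10 d12 e1 e2); first exact: Us x11 lt1 a2.
  by move=> le21; have [u1 u2] := Um x21 le21 x12; split.
have [/andP[x11 x12] lt1] := Wd_inv d1 D n hd1 D0.
have [/andP[x21 x22] _] := Wd_inv d2 D n hd2 D0.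
have /andP[a1 a2] := W_in (n + D).
rewrite !Wd_S; apply: alg1 => //.
- exact: Us x11 lt1 a2.
- by have [] := Um x11 (ltW IH) x22.
Qed.

Lemma part_ii d D1 D2 n : 0 < d < 1 -> (0 < D1)%N -> (D1 < D2)%N ->
  Wd d D1 n < Wd d D2 n.
Proof.
move=> hd D10 D12.
have D20 : (0 < D2)%N by apply: leq_trans D10 (ltnW D12).
elim: n => [|n IH].
  have [[/andP[x11 x12] e1] [/andP[x21 x22] e2]] := (Wd0 D1 hd, Wd0 D2 hd).
  have /andP[a1 a2] := W_in D1; have /andP[a3 a4] := W_in D2.
  apply: (alg2 _ _ _ _ _ _ _ _ _ hb hd e1 e2); first exact: Us a1 (W_lt D12) a4.
  by move=> le21; have [u1 u2] := Um x21 le21 x12; split.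
have [/andP[x11 x12] _] := Wd_inv d D1 n hd D10.
have [/andP[x21 x22] _] := Wd_inv d D2 n hd D20.
have /andP[a1 a2] := W_in (n + D1); have /andP[a3 a4] := W_in (n + D2).
rewrite !Wd_S; apply: alg3 => //.
- have Dl : (n + D1 < n + D2)%N by rewrite ltn_add2l.
  exact: Us a1 (W_lt Dl) a4.
- by have [] := Um x11 (ltW IH) x22.
Qed.
End main.

Theorem proposition3 (R : realType) (beta z c : R) (N : nat)
  (F : cumulativeBounded (0:R) (1:R)) (wl wh : R) :
  0 < beta < 1 -> 0 < z -> 0 < c -> (0 < N)%N ->
  (* F continuous, with support [wl, wh] *)
  continuous (F : R -> R) -> wl < wh ->
  F wl = 0 -> F wh = 1 -> (forall a b, wl <= a -> a < b -> b <= wh -> F a < F b) ->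
  wl < (1 - beta) * z + beta * meanF F wl wh ->
  z + c < wh ->
  forall n : nat, (n <= N)%N ->
    (* (i) strictly increasing in delta, for fixed Delta *)
    (forall (Delta : nat) (d1 d2 : R), (0 < Delta)%N ->
       0 < d1 -> d1 < d2 -> d2 < 1 ->
       wRd F wl wh beta z c d1 Delta n < wRd F wl wh beta z c d2 Delta n)
    /\
    (* (ii) strictly increasing in Delta (positive integers), for fixed delta *)
    (forall (delta : R) (D1 D2 : nat), 0 < delta < 1 ->
       (0 < D1)%N -> (D1 < D2)%N ->
       wRd F wl wh beta z c delta D1 n < wRd F wl wh beta z c delta D2 n).
Proof.
move=> hb hz hc _ _ lw Fwl _ Fs hmean hzc n _; split.
- by move=> D d1 d2 D0 d10 d12 d21; apply: part_i.
- by move=> d D1 D2 hd D10 D12; apply: part_ii.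
Qed.
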